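(* Let $G$ be a connected graph of order $n$, maximum degree $\Delta$, and diameter $d$. Then: (i) $\gamma_{e,f}^*(G)\ge \frac{d+3}{6}$; (ii) if $\Delta=3$, then $\gamma_{e,f}^*(G)\ge \frac{n}{2+3d}$; (iii) if $\Delta\ge 4$, then $\gamma_{e,f}^*(G)\ge \left(\dfrac{\frac{\Delta-1}{2}-1}{\Delta\left(\frac{\Delta-1}{2}\right)^d-3}\right)n$.
   Context: All graphs are finite, simple and undirected. The fractional porous exponential domination number $\gamma_{e,f}^*(G)$ is the optimum value of the linear program: minimize $\sum_{u\in V(G)}x(u)$ subject to $\sum_{u\in V(G)}\left(\frac12\right)^{\mathrm{dist}_G(u,v)-1}x(u)\ge 1$ for every $v\in V(G)$ and $x(u)\ge 0$ for every $u\in V(G)$, where $\mathrm{dist}_G$ is the usual graph distance. *)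

(* Defs.v *)
From HB Require Import structures.
From mathcomp Require Import all_boot all_order all_algebra.
Set Implicit Arguments. Unset Strict Implicit. Unset Printing Implicit Defensive.
Import Order.TTheory GRing.Theory Num.Theory.
Local Open Scope ring_scope.

Definition simple_graph (T : finType) (e : rel T) : Prop :=
  symmetric e /\ irreflexive e.

Definition connected_graph (T : finType) (e : rel T) : Prop :=
  forall u v : T, connect e u v.

Fixpoint ball (T : finType) (e : rel T) (k : nat) (u : T) : {set T} :=
  match k with
  | 0 => [set u]
  | k'.+1 => ball e k' u :|: [set y | [exists x in ball e k' u, e x y]]
  end.

(* graph distance: least k with v in the k-ball of u (a shortest path in a
   connected graph has fewer than #|T| edges; returns #|T| if unreachable). *)
Definition gdist (T : finType) (e : rel T) (u v : T) : nat :=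
  find (fun k => v \in ball e k u) (iota 0 #|T|)%N.

Definition diameter (T : finType) (e : rel T) : nat :=
  (\max_(u : T) \max_(v : T) gdist e u v)%N.

Definition max_degree (T : finType) (e : rel T) : nat :=
  (\max_(v : T) #|[set w | e v w]|)%N.

Definition pweight (R : realFieldType) (T : finType) (e : rel T) (u v : T) : R :=
  ((2%:R : R)^-1) ^ ((gdist e u v)%:Z - 1).

(* feasible solutions of the LP defining gamma*_{e,f} *)
Definition fpe_feasible (R : realFieldType) (T : finType) (e : rel T)
  (x : T -> R) : Prop :=
  (forall u, 0 <= x u) /\
  (forall v, 1 <= \sum_(u : T) pweight R e u v * x u).

(* Main.v *)
Require Import Defs.
From HB Require Import structures.
From mathcomp Require Import all_boot all_order all_algebra.
From mathcomp Require Import zify ring lra.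
Import Order.TTheory GRing.Theory Num.Theory.
Set Implicit Arguments. Unset Strict Implicit. Unset Printing Implicit Defensive.

Section G.
Variables (T : finType) (e : rel T).

Lemma ballS k u y : (y \in ball e k.+1 u) = (y \in ball e k u) || [exists x in ball e k u, e x y].
Proof. by rewrite /= inE inE. Qed.

Lemma ball_mono k l u : (k <= l)%N -> {subset ball e k u <= ball e l u}.
Proof.
move=> kl; elim: l kl => [|l IH]; first by rewrite leqn0 => /eqP ->.
rewrite leq_eqVlt => /orP [/eqP -> //| kl] y /(IH kl) yk.
by rewrite ballS yk.
Qed.

Lemma ball0 u v : (v \in ball e 0 u) = (v == u).
Proof. by rewrite /= inE. Qed.

Lemma ball_edge k u x y : x \in ball e k u -> e x y -> y \in ball e k.+1 u.
Proof. move=> xk exy; rewrite ballS; apply/orP; right; apply/existsP; exists x; by rewrite xk. Qed.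

Lemma ball_trans k l x y z : y \in ball e k x -> z \in ball e l y -> z \in ball e (k + l) x.
Proof.
move=> yk; elim: l z => [|l IH] z; first by rewrite ball0 addn0 => /eqP ->.
rewrite ballS => /orP [/IH zk|/existsP [w /andP [wl ewz]]].
  by apply: (ball_mono _ zk); rewrite addnS.
by rewrite addnS; apply: ball_edge (IH _ wl) ewz.
Qed.

Lemma ball_sym k u v : symmetric e -> v \in ball e k u -> u \in ball e k v.
Proof.
move=> se; elim: k u v => [|k IH] u v; first by rewrite !ball0 eq_sym.
rewrite ballS => /orP [/IH H|/existsP [x /andP [xk exv]]].
  by apply: (ball_mono (leqnSn k)).
have h1 : x \in ball e 1 v by apply: (ball_edge (k:=0)); rewrite ?ball0 // se.
by rewrite -add1n; apply: ball_trans h1 (IH _ _ xk).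
Qed.

Lemma connect_ball u v : connect e u v -> v \in ball e #|T|.-1 u.
Proof.
move/connectP=> [p0 pp0 ->]; case: (shortenP pp0) => p pp up _.
have sz : (size p <= #|T|.-1)%N.
  have := max_card (mem (u :: p)); rewrite (card_uniqP up) /= => h.
  move: h; set N := #|T|; lia.
apply: (ball_mono sz); elim/last_ind: p pp {up sz} => [|p y IH] //=; first by rewrite ball0.
rewrite rcons_path => /andP [pp ey]; rewrite last_rcons size_rcons.
exact: ball_edge (IH pp) ey.
Qed.


Hypothesis conn : connected_graph e.

Lemma gdist_lt u v : (gdist e u v < #|T|)%N /\ v \in ball e (gdist e u v) u.
Proof.
have N0 : (0 < #|T|)%N by apply/card_gt0P; exists u.
set s := iota 0 #|T|; set P := fun k => v \in ball e k u.
have hP : has P s.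
  apply/hasP; exists #|T|.-1; first by rewrite mem_iota; lia.
  exact: connect_ball (conn u v).
have fl : (find P s < #|T|)%N by have := has_find P s; rewrite hP size_iota.
split=> //; have := nth_find 0 hP; rewrite nth_iota // add0n.
Qed.

Lemma in_ballE k u v : (v \in ball e k u) = (gdist e u v <= k)%N.
Proof.
have [fl Pf] := gdist_lt u v.
apply/idP/idP => [vk|gk]; last first.
  exact (ball_mono gk Pf).
rewrite leqNgt; apply/negP => lt.
have kN : (k < #|T|)%N by apply: ltn_trans lt fl.
have := before_find 0 lt; rewrite nth_iota // add0n.
by rewrite /= vk.
Qed.

Lemma gdist_tri u v w : (gdist e u w <= gdist e u v + gdist e v w)%N.
Proof.
rewrite -in_ballE; apply: (ball_trans (y:=v)); rewrite in_ballE //.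
Qed.

Hypothesis se : symmetric e.

Lemma gdistC u v : gdist e u v = gdist e v u.
Proof.
by apply/eqP; rewrite eqn_leq -!in_ballE; apply/andP; split; apply: ball_sym => //; rewrite in_ballE.
Qed.

Lemma gdist0 u v : (gdist e u v == 0%N) = (u == v).
Proof. by rewrite -leqn0 -in_ballE ball0 eq_sym. Qed.

Lemma gdist_refl u : gdist e u u = 0%N.
Proof. by apply/eqP; rewrite gdist0. Qed.

Lemma gdist_edge u x y : e x y -> (gdist e u y <= (gdist e u x).+1)%N.
Proof. move=> exy; rewrite -in_ballE; apply: ball_edge exy; by rewrite in_ballE. Qed.

Lemma gdist_pred u v k : gdist e u v = k.+1 -> exists x, gdist e u x = k /\ e x v.
Proof.
move=> gv; have : v \in ball e k.+1 u by rewrite in_ballE gv.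
rewrite ballS in_ballE gv ltnn /= => /existsP [x /andP [xk exv]].
exists x; split=> //; apply/eqP; rewrite eqn_leq -in_ballE xk /=.
by rewrite -ltnS -gv gdist_edge.
Qed.

Lemma gdist_all u v i : (i <= gdist e u v)%N -> exists x, gdist e u x = i.
Proof.
have H : forall m v, gdist e u v = m -> (i <= m)%N -> exists x, gdist e u x = i.
  elim=> [|m IH] w gw; first by rewrite leqn0 => /eqP ->; exists w.
  rewrite leq_eqVlt => /orP [/eqP ->|]; first by exists w.
  by rewrite ltnS; have [x [gx _]] := gdist_pred gw; apply: IH gx.
exact: H.
Qed.

End G.

Lemma count_window (P : pred nat) n lo w :
  (forall i, (i < n)%N -> P i -> (lo <= i <= lo + w)%N) -> (count P (iota 0 n) <= w.+1)%N.
Proof.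
move=> H; rewrite -size_filter.
have -> : w.+1 = size (iota lo w.+1) by rewrite size_iota.
apply: uniq_leq_size; first by rewrite filter_uniq // iota_uniq.
move=> y; rewrite mem_filter mem_iota add0n => /andP [Py yn].
have := H y yn Py; rewrite mem_iota; lia.
Qed.

Lemma count_span (P : pred nat) n w :
  (forall i j, (i < n)%N -> (j < n)%N -> P i -> P j -> (j - i <= w)%N) ->
  (count P (iota 0 n) <= w.+1)%N.
Proof.
move=> H; case: (boolP (has P (iota 0 n))) => [hP|]; last first.
  by rewrite has_count; lia.
have ex : exists i, (i < n) && P i.
  by move/hasP: hP => [i]; rewrite mem_iota add0n => /andP [_ iN] Pi; exists i; rewrite iN.
case: (ex_minnP ex) => m /andP [mn Pm] mmin.
apply: (count_window (lo := m)) => i iN Pi.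
have := mmin i; rewrite iN Pi => /(_ isT) mi.
have := H m i mn iN Pm Pi; lia.
Qed.

Section Key.
Variable R : realFieldType.
Local Open Scope ring_scope.
Let h : R := 2^-1.

Lemma h_ge0 : 0 <= h. Proof. by rewrite /h invr_ge0 ler0n. Qed.

Lemma layer_elem (x K : nat) : (x <= K)%N ->
  h ^+ x = \sum_(k < K) h ^+ k.+1 * (x <= k)%:R + h ^+ K.
Proof.
elim: K => [|K IH]; first by rewrite leqn0 => /eqP ->; rewrite big_ord0 add0r.
rewrite leq_eqVlt => /orP [/eqP ->|xK].
  rewrite big1 ?add0r // => k _; by rewrite leqNgt ltn_ord /= mulr0n mulr0.
rewrite ltnS in xK; rewrite IH // big_ord_recr /= xK mulr1 -addrA; congr (_ + _).
by rewrite exprS /h; field.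
Qed.

Lemma layer_cake (L : seq nat) (K : nat) : all (fun x => x <= K)%N L ->
  \sum_(x <- L) h ^+ x =
  \sum_(k < K) h ^+ k.+1 * (count (fun x => x <= k)%N L)%:R + (size L)%:R * h ^+ K.
Proof.
elim: L => [|x L IH]; first by rewrite big_nil big1 ?add0r ?mul0r // => k _; rewrite mulr0.
rewrite /= => /andP [xK aK]; rewrite big_cons IH // (layer_elem xK).
rewrite addrACA; congr (_ + _); last by rewrite -add1n natrD mulrDl mul1r.
by rewrite -big_split /=; apply: eq_bigr => k _; rewrite natrD mulrDr.
Qed.

Lemma potential (M c : nat -> nat) (K : nat) :
  c 0%N = 3%N -> (forall k, M k + c k.+1 <= (c k).*2)%N ->
  \sum_(k < K) h ^+ k.+1 * (M k)%:R + (c K)%:R * h ^+ K <= 3.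
Proof.
move=> c0 Hc; elim: K => [|K IH]; first by rewrite big_ord0 add0r c0 expr0 mulr1.
apply: le_trans IH; rewrite big_ord_recr /= -addrA lerD2l.
have -> : h ^+ K.+1 * (M K)%:R + (c K.+1)%:R * h ^+ K.+1 = h ^+ K.+1 * (M K + c K.+1)%:R.
  by rewrite natrD; ring.
have -> : (c K)%:R * h ^+ K = h ^+ K.+1 * (c K * 2)%:R.
  by rewrite natrM exprS /h; field.
rewrite ler_wpM2l ?exprn_ge0 ?h_ge0 // ler_nat; have := Hc K; rewrite -muln2; lia.
Qed.

Lemma count2 (P : pred nat) x y s : count P [:: x, y & s] = (P x + P y + count P s)%N.
Proof. by rewrite /= addnA. Qed.

Lemma count_bounds (a : nat -> nat) (d : nat) :
  (forall i j, (i <= d)%N -> (j <= d)%N -> (j - i <= a i + a j)%N) -> forall k,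
  let N := count (fun i => a i <= k)%N (iota 0 d.+1) in
  [/\ (N <= (2 * k).+1)%N, (N <= d.+1)%N,
      (a 0%N <= k -> N <= (k + a 0%N).+1)%N & (a d <= k -> N <= (k + a d).+1)%N].
Proof.
move=> Ha k N; split.
- apply: count_span => i j iN jN Pi Pj; have := Ha i j iN jN; lia.
- by rewrite -[X in (_ <= X)%N](size_iota 0) count_size.
- move=> a0k; apply: (count_window (lo := 0)) => i iN Pi.
  have := Ha 0%N i (leq0n _) iN; lia.
- move=> adk; apply: (count_window (lo := d - (k + a d))) => i iN Pi.
  have := Ha i d iN (leqnn _); lia.
Qed.

Lemma key (a : nat -> nat) (d : nat) :
  (forall i j, (i <= d)%N -> (j <= d)%N -> (j - i <= a i + a j)%N) ->
  \sum_(i < d.+1) h ^+ (a i) + h ^+ (a 0%N) + h ^+ (a d) <= 3.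
Proof.
move=> Ha.
set L := [:: a 0%N, a d & [seq a i | i <- iota 0 d.+1]].
have EL : \sum_(x <- L) h ^+ x = \sum_(i < d.+1) h ^+ (a i) + h ^+ (a 0%N) + h ^+ (a d).
  rewrite 2!big_cons big_map -(big_mkord xpredT (fun i => h ^+ a i)) /index_iota subn0.
  ring.
set K := (d + sumn L)%N.
have aK : all (fun x => x <= K)%N L.
  apply/allP => x xL; rewrite /K; apply: leq_trans (leq_addl _ _).
  elim: (L) xL => [|y l IH] //=; rewrite inE => /orP [/eqP ->|/IH]; lia.
rewrite -EL (layer_cake aK).
set p := minn (a 0%N) (a d).
pose c k := minn (2 * k + 3) (minn (k + p + 3) (d + 3)).
have c0 : c 0%N = 3%N by rewrite /c; lia.
have sL : size L = (d + 3)%N by rewrite /= size_map size_iota; lia.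
apply: le_trans (@potential (fun k => count (fun x => x <= k)%N L) c K c0 _).
  rewrite lerD2l sL ler_wpM2r ?exprn_ge0 ?h_ge0 // ler_nat.
  have dK : (d <= K)%N by apply: leq_addr.
  rewrite /c; clearbody K p; lia.
move=> k.
have -> : count (fun x => x <= k)%N L = ((a 0%N <= k) + (a d <= k) + count (fun i => a i <= k)%N (iota 0 d.+1))%N.
  by rewrite /L count2 count_map.
have [N1 N2 N3 N4] := count_bounds Ha k; have ad := Ha 0%N d (leq0n _) (leqnn _).
rewrite /c /p; clearbody K L; move: N1 N2 N3 N4; set N := count _ (iota _ _).
clearbody N; clear -ad.
case: (leqP (a 0%N) k) => h0; case: (leqP (a d) k) => hd /= N1 N2 N3 N4.
- have := N3 isT; have := N4 isT; lia.
- have := N3 isT; lia.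
- have := N4 isT; lia.
- lia.
Qed.

End Key.
Local Open Scope ring_scope.

Lemma pweightE (R : realFieldType) (T : finType) (e : rel T) u v :
  pweight R e u v = 2 * (2^-1) ^+ gdist e u v.
Proof.
rewrite /pweight expfzDr ?invr_eq0 ?pnatr_eq0 // exprN1 invrK mulrC.
by rewrite -exprnP.
Qed.

Section L.
Variables (T : finType) (e : rel T).
Hypothesis conn : connected_graph e.
Hypothesis se : symmetric e.

Definition layer u k := [set v | gdist e u v == k].

Lemma card_layer0 u : #|layer u 0| = 1%N.
Proof.
rewrite -(cards1 u); apply: eq_card => v; rewrite !inE gdist0 // eq_sym.
Qed.

Lemma card_layer1 u : (#|layer u 1| <= max_degree e)%N.
Proof.
rewrite /max_degree; apply: (leq_trans _ (leq_bigmax (F := fun v => #|[set w | e v w]|) u)).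
apply: subset_leq_card; apply/subsetP => v; rewrite !inE => /eqP g1.
have [x [gx ex]] := gdist_pred conn g1.
by move/eqP: gx; rewrite gdist0 // => /eqP ->.
Qed.

Lemma card_bigcup_le (I : finType) (P : pred I) (F : I -> {set T}) :
  (#|\bigcup_(i | P i) F i| <= \sum_(i | P i) #|F i|)%N.
Proof.
apply: (big_ind2 (fun (S : {set T}) (n : nat) => #|S| <= n)%N) => //.
- by rewrite cards0.
- move=> A m B n hA hB; apply: leq_trans (leq_card_setU A B) _; exact: leq_add.
Qed.

Lemma card_layerS u k :
  (#|layer u k.+2| <= #|layer u k.+1| * (max_degree e).-1)%N.
Proof.
rewrite -sum_nat_const.
apply: (@leq_trans #|\bigcup_(x in layer u k.+1) ([set w | e x w] :&: layer u k.+2)|).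
  apply: subset_leq_card; apply/subsetP => v vin; have := vin; rewrite inE => /eqP g2.
  have [x [gx ex]] := gdist_pred conn g2.
  by apply/bigcupP; exists x; rewrite !inE ?gx ?ex //= -g2.
apply: (leq_trans (card_bigcup_le _ _)); apply: leq_sum.
move=> x; rewrite inE => /eqP gx.
have [y [gy ey]] := gdist_pred conn gx.
have yN : y \in [set w | e x w] by rewrite inE se.
apply: (@leq_trans #|[set w | e x w] :\ y|).
  apply: subset_leq_card; apply/subsetP => w; rewrite !inE => /andP [exw /eqP gw].
  rewrite exw andbT; apply/eqP => wy; move: gw; rewrite wy gy => /eqP; lia.
have := cardsD1 y [set w | e x w]; rewrite yN add1n => h.
have := leq_bigmax (F := fun v => #|[set w | e v w]|) x; rewrite h /= => hh.
rewrite /max_degree; move: hh; set M := (\max_(v : T) _)%N; lia.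
Qed.

Lemma card_layer_bound u k :
  (#|layer u k.+1| <= max_degree e * (max_degree e).-1 ^ k)%N.
Proof.
elim: k => [|k IH]; first by rewrite expn0 muln1 card_layer1.
apply: (leq_trans (card_layerS u k)); apply: (leq_trans (leq_mul IH (leqnn _))).
by rewrite expnS mulnCA mulnC.
Qed.

End L.

Lemma Wbound (R : realFieldType) (T : finType) (e : rel T) (d : nat) u :
  connected_graph e -> symmetric e -> (1 <= max_degree e)%N ->
  (forall v, gdist e u v <= d)%N ->
  \sum_v pweight R e u v <=
    2 + \sum_(k < d) (max_degree e)%:R * (((max_degree e)%:R - 1) / 2) ^+ k.
Proof.
move=> conn se D1 gd.
set h : R := 2^-1.
have E : \sum_v pweight R e u v = \sum_(j < d.+1) (#|layer e u j|)%:R * (2 * h ^+ j).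
  rewrite (partition_big (fun v => inord (gdist e u v) : 'I_d.+1) xpredT) //=.
  apply: eq_bigr => j _.
  rewrite (eq_bigr (fun _ => 2 * h ^+ j)); last first.
    by move=> v /eqP <-; rewrite pweightE inordK // ltnS.
  rewrite sumr_const [RHS]mulr_natl; congr (_ *+ _); apply: eq_card => v.
  by rewrite [in RHS]inE unfold_in /= inordK // ltnS.
rewrite E big_ord_recl /= card_layer0 // expr0 mulr1 mul1r lerD2l.
apply: ler_sum => j _.
have hb := card_layer_bound conn se u j.
have -> : ((max_degree e)%:R - 1) / 2 = ((max_degree e).-1)%:R * h :> R.
  by rewrite -{1}(prednK D1) -natr1 addrK.
have -> : bump 0 j = j.+1 by rewrite /bump /= add1n.
rewrite exprS /h [2 * _]mulrA mulfV ?pnatr_eq0 // mul1r.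
rewrite exprMn mulrA -natrX -natrM.
by rewrite ler_wpM2r ?exprn_ge0 ?invr_ge0 ?ler0n // ler_nat.
Qed.

Unset Implicit Arguments.


Lemma geom (R : realFieldType) (r : R) d : (r - 1) * \sum_(k < d) r ^+ k = r ^+ d - 1.
Proof.
elim: d => [|d IH]; first by rewrite big_ord0 mulr0 expr0 subrr.
by rewrite big_ord_recr /= mulrDr IH exprS; ring.
Qed.

Theorem mainTheorem6 (R : realFieldType) (T : finType) (e : rel T) :
  simple_graph e -> connected_graph e -> (0 < #|T|)%N ->
  let n := #|T| in
  let D := max_degree e in
  let d := diameter e in
  forall x : T -> R, fpe_feasible e x ->
  let g := \sum_(u : T) x u in
  [/\ ((d%:R + 3) / 6 <= g),
      (D = 3%N -> n%:R / (2 + 3 * d%:R) <= g) &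
      ((4 <= D)%N ->
        (((D%:R - 1) / 2 - 1) / (D%:R * ((D%:R - 1) / 2) ^+ d - 3)) * n%:R <= g)].
Proof.
move=> [se irr] conn n0 n D d x [x0 feas] g.
have gd : forall u v, (gdist e u v <= d)%N.
  move=> u v; rewrite /d /diameter.
  apply: leq_trans (leq_bigmax (F := fun v => gdist e u v) v) _.
  exact: (leq_bigmax (F := fun u => (\max_v gdist e u v)%N) u).
have swap : forall F : T -> R,
    \sum_v F v * \sum_u pweight R e u v * x u = \sum_u x u * \sum_v F v * pweight R e u v.
  move=> F; rewrite (eq_bigr (fun v => \sum_u F v * pweight R e u v * x u)); last first.
    by move=> v _; rewrite mulr_sumr; apply: eq_bigr => u _; rewrite mulrA.
  rewrite exchange_big /=; apply: eq_bigr => u _; rewrite mulr_sumr.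
  by apply: eq_bigr => v _; rewrite mulrC.
have gen : forall B, (forall u, \sum_v pweight R e u v <= B) -> n%:R <= B * g.
  move=> B WB.
  apply: (@le_trans _ _ (\sum_(v : T) 1 * \sum_u pweight R e u v * x u)).
    rewrite -sumr_const /n; apply: ler_sum => v _; rewrite mul1r; exact: feas.
  rewrite swap /g mulr_sumr; apply: ler_sum => u _.
  rewrite mulrC ler_wpM2r //.
  by apply: le_trans (WB u); rewrite le_eqVlt; apply/orP; left; apply/eqP; apply: eq_bigr => v _; rewrite mul1r.
split.
- have [u0 Hu0] := @bigop.eq_bigmax T (fun u => (\max_v gdist e u v)%N) n0.
  have [v0 Hv0] := @bigop.eq_bigmax T (fun v => gdist e u0 v) n0.
  have dv : gdist e u0 v0 = d by rewrite /d /diameter Hu0 Hv0.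
  pose vi i := odflt u0 [pick y | gdist e u0 y == i].
  have hvi : forall i, (i <= d)%N -> gdist e u0 (vi i) = i.
    move=> i id; have [y gy] : exists y, gdist e u0 y = i.
      by apply: (gdist_all conn (v:=v0)); rewrite dv.
    rewrite /vi; case: pickP => [z /eqP //|/(_ y)]; by rewrite gy eqxx.
  have Ku : forall u, \sum_(i < d.+1) (2^-1 : R) ^+ gdist e u (vi i)
      + (2^-1) ^+ gdist e u (vi 0%N) + (2^-1) ^+ gdist e u (vi d) <= 3.
    move=> u; apply: (@key R (fun i => gdist e u (vi i)) d) => i j id jd.
    have t1 := gdist_tri conn u0 (vi i) (vi j).
    have t2 := gdist_tri conn (vi i) u (vi j).
    have t3 := gdistC conn se (vi i) u.
    rewrite hvi // hvi // in t1; lia.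
  set C := fun v => \sum_u pweight R e u v * x u.
  have LB : (d + 3)%:R <= \sum_(i < d.+1) C (vi i) + C (vi 0%N) + C (vi d).
    have -> : (d + 3)%:R = \sum_(i < d.+1) (1 : R) + 1 + 1.
      by rewrite sumr_const card_ord -!natr1 addn3 -addn1 natrD; ring.
    by rewrite !lerD ?feas //; apply: ler_sum => i _; apply: feas.
  have UB : \sum_(i < d.+1) C (vi i) + C (vi 0%N) + C (vi d) <= 6 * g.
    rewrite /C exchange_big /= -!big_split /= /g mulr_sumr; apply: ler_sum => u _.
    rewrite -mulr_suml -!mulrDl ler_wpM2r //.
    rewrite (eq_bigr (fun i : 'I_d.+1 => 2 * (2^-1 : R) ^+ gdist e u (vi i))); last by move=> i _; rewrite pweightE.
    rewrite -mulr_sumr !pweightE.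
    have := Ku u; lra.
  have := le_trans LB UB; rewrite natrD => H.
  by rewrite ler_pdivrMr ?ltr0n // mulrC.
- move=> D3.
  have D1 : (1 <= max_degree e)%N by rewrite -/D D3.
  have := gen _ (fun u => Wbound R conn se D1 (gd u)).
  rewrite -/D D3 /=.
  have r1 : ((3:R) - 1) / 2 = 1 by field.
  rewrite r1 (eq_bigr (fun _ => 3)); last by move=> k _; rewrite expr1n mulr1.
  rewrite sumr_const cardT size_enum_ord => H.
  have e3 : (3:R) *+ d = 3 * d%:R by rewrite mulr_natr.
  rewrite e3 in H.
  have Bp : 0 < 2 + 3 * d%:R :> R by have := ler0n R d; lra.
  by rewrite ler_pdivrMr // mulrC.
- move=> D4.
  have D1 : (1 <= max_degree e)%N by apply: leq_trans D4.
  have := gen _ (fun u => Wbound R conn se D1 (gd u)).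
  rewrite -/D; set r := ((D%:R - 1) / 2 : R).
  rewrite -mulr_sumr; set S := \sum_(k < d) r ^+ k.
  have D4' : 4 <= D%:R :> R by rewrite (ler_nat R 4).
  have hr : r * 2 = D%:R - 1 by rewrite /r mulfVK // pnatr_eq0.
  have r1 : 1 < r by lra.
  have S0 : 0 <= S by apply: sumr_ge0 => k _; apply: exprn_ge0; lra.
  have QE : D%:R * r ^+ d - 3 = (r - 1) * (2 + D%:R * S).
    rewrite mulrDr mulrCA geom; nra.
  move=> H; rewrite QE invfM mulrA mulfV ?mul1r; last by apply/eqP; lra.
  have Bp : 0 < 2 + D%:R * S by nra.
  by rewrite mulrC ler_pdivrMr // mulrC.
Qed.
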